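(* Let $(\mathcal{C},\mathcal{B},Q,S)$ be an STV election, counted by the procedure described in the context. Let $W\subseteq\mathcal{C}$, let $b,c$ be distinct candidates not in $W$, let $\overline{\tau}=(\overline{\tau}_w)_{w\in W}$ be real numbers, and let $G\subseteq\mathcal{C}$ be such that $L_{\mathrm{basic}}(g)>U_{\mathrm{comp}}(c,g)$ (the assertion $\mathsf{AG}(g,c)$) holds for all $g\in G$. Assume that only candidates in $W\cup\{b,c\}$ can be seated, that all candidates in $W$ are seated (this may happen before, during or after the point considered), that for each $w\in W$ the transfer value of any ballot that was in $w$'s pile at the time $w$ was seated is at most $\overline{\tau}_w$, and that $b$ is eligible. Then $U_{\mathrm{complex}}(c,b,W,\overline{\tau},G)$ is an upper bound on the tally of $c$.
   Context: An STV election is a tuple $(\mathcal{C},\mathcal{B},Q,S)$ where $\mathcal{C}$ is a finite set of candidates, $\mathcal{B}$ is a multiset of ballots (each ballot is a finite sequence of distinct candidates, in order of preference, most preferred first, not necessarily containing all candidates), $S$ is the number of seats, and $Q=\lfloor |\mathcal{B}|/(S+1)\rfloor+1$ is the quota. For a sequence $\pi$, $\mathrm{first}(\pi)$ is its first element, and for a set $X$ of candidates, $\sigma_X(\pi)$ is the subsequence of $\pi$ consisting of the elements of $X$, in their original order. Counting: every ballot starts with value $1$ and is placed in the pile of its first-ranked candidate; a candidate's tally is the total value of the ballots in its pile. A candidate is eligible if neither eliminated nor seated. In each round every eligible candidate with tally at least $Q$ is seated (gets a quota), and every ballot in its pile is given a new value, the transfer value (e.g. unweighted Gregory: $(V_c-Q)/|\mathcal{B}_c|$,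 with $V_c$ the total value and $|\mathcal{B}_c|$ the number of ballots in its pile), and moved to the next-ranked eligible candidate on the ballot (or exhausted). If no candidate reaches a quota, the eligible candidate with smallest tally is eliminated and its ballots move at their current value to their next-ranked eligible candidate (or are exhausted). Counting stops when all $S$ seats are filled or the number of eligible candidates equals the number of unfilled seats, in which case all remaining eligible candidates are seated. The transfer-value rule is assumed to satisfy: an upper bound on a ballot's value is the maximum of the upper bounds on the per-candidate transfer values it was subjected to. Definitions (counts with multiplicity): $L_{\mathrm{basic}}(c)=|\{\beta\in\mathcal{B}:\mathrm{first}(\beta)=c\}|$; $U_{\mathrm{comp}}(c,c')=|\{\beta\in\mathcal{B}:\mathrm{first}(\sigma_{\{c,c'\}}(\beta))=c\}|$. Further, $U_{\mathrm{complex}}(c,b,W,\overline{\tau},G)=\sum_{\beta\in\mathcal{B}}u(\beta)$ (sum over the multiset), where $u(\beta)$ is given by the first applicable case: $u(\beta)=0$ if there is $g\in G\setminus W$ with $\mathrm{first}(\sigma_{\{g,c\}}(\beta))=g$; $u(\beta)=0$ if $c$ does not occur in $\beta$; $u(\beta)=0$ if $\mathrm{first}(\sigma_{\{b,c\}}(\beta))=b$; $u(\beta)=\max\{\overline{\tau}_w: w\in W,\ w \text{ precedes } c \text{ in } \beta\}$ if $\mathrm{first}(\beta)\in W$; and $u(\beta)=1$ otherwise. *)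

(* Defs.v *)
From HB Require Import structures.
From mathcomp Require Import all_boot all_order all_algebra.
Set Implicit Arguments. Unset Strict Implicit. Unset Printing Implicit Defensive.
Import Order.TTheory GRing.Theory Num.Theory.
Local Open Scope ring_scope.

Section STV.
Variables (C : finType) (R : realFieldType).

Definition first_in (X : {set C}) (beta : seq C) : option C :=
  ohead [seq x <- beta | x \in X].

Definition L_basic (bs : seq (seq C)) (c : C) : nat :=
  count (fun beta => ohead beta == Some c) bs.

Definition U_comp (bs : seq (seq C)) (c c' : C) : nat :=
  count (fun beta => first_in [set c; c'] beta == Some c) bs.

Definition AG (bs : seq (seq C)) (g c : C) : Prop := (U_comp bs c g < L_basic bs g)%N.

Definition u_complex (c b : C) (W : {set C}) (tau : C -> R) (G : {set C})
    (beta : seq C) : R :=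
  if [exists g in G :\: W, first_in [set g; c] beta == Some g] then 0
  else if c \notin beta then 0
  else if first_in [set b; c] beta == Some b then 0
  else match ohead beta with
       | Some f => if f \in W then
              (* max of tau_w over the w in W preceding c in beta (f is one of them) *)
              \big[Num.max/tau f]_(w <- take (index c beta) beta | w \in W) tau w
            else 1
       | None => 1
       end.

Definition U_complex (bs : seq (seq C)) (c b : C) (W : {set C}) (tau : C -> R)
    (G : {set C}) : R :=
  \sum_(beta <- bs) u_complex c b W tau G beta.

Variable bs : seq (seq C).
Variable S : nat.

Local Notation n := (size bs).

Definition ballot (i : 'I_n) : seq C := nth [::] bs i.

(* Droop quota *)
Definition quota : nat := (n %/ S.+1).+1.

(* A state of the count: seated and eliminated candidates, the pile each
   ballot currently sits in (None = exhausted) and its current value. *)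
Record state := State {
  seated : {set C};
  elim : {set C};
  pile : 'I_n -> option C;
  value : 'I_n -> R }.

Definition is_eligible (st : state) (x : C) : bool :=
  (x \notin seated st) && (x \notin elim st).

Definition eligible_set (st : state) : {set C} := [set x | is_eligible st x].

Definition cand_tally (st : state) (x : C) : R :=
  \sum_(i < n | pile st i == Some x) value st i.

Definition init_state : state :=
  State set0 set0 (fun i => ohead (ballot i)) (fun _ => 1).

(* next-ranked candidate after x on beta that is eligible in st (None = exhausted) *)
Definition next_eligible (st : state) (beta : seq C) (x : C) : option C :=
  ohead [seq y <- drop (index x beta).+1 beta | is_eligible st y].

Definition running (st : state) : Prop :=
  (#|seated st| < S)%N /\ #|eligible_set st| <> (S - #|seated st|)%N.

Definition reaches_quota (st : state) (x : C) : bool :=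
  is_eligible st x && ((quota%:R : R) <= cand_tally st x).

(* A round in which quotas are reached: every eligible candidate with tally
   >= Q is seated, each ballot in its pile gets a transfer value (the rule is
   abstract: any value in [0,1]) and moves to the next eligible candidate. *)
Definition quota_round (st st' : state) : Prop :=
  running st /\
  (exists x, reaches_quota st x) /\
  seated st' = seated st :|: [set x | reaches_quota st x] /\
  elim st' = elim st /\
  (forall i : 'I_n,
     match pile st i with
     | Some x =>
         if reaches_quota st x then
           (0 <= value st' i <= 1) /\ pile st' i = next_eligible st' (ballot i) x
         else pile st' i = pile st i /\ value st' i = value st i
     | None => pile st' i = None /\ value st' i = value st i
     end).

Definition elim_round (st st' : state) : Prop :=
  running st /\
  (forall x, is_eligible st x -> cand_tally st x < quota%:R) /\
  exists e, is_eligible st e /\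
    (forall x, is_eligible st x -> cand_tally st e <= cand_tally st x) /\
    seated st' = seated st /\
    elim st' = e |: elim st /\
    (forall i : 'I_n,
       if pile st i == Some e then
         pile st' i = next_eligible st' (ballot i) e /\ value st' i = value st i
       else pile st' i = pile st i /\ value st' i = value st i).

Definition final_round (st st' : state) : Prop :=
  (#|seated st| < S)%N /\ #|eligible_set st| = (S - #|seated st|)%N /\
  seated st' = seated st :|: eligible_set st /\
  elim st' = elim st /\
  (forall i, pile st' i = pile st i) /\
  (forall i, value st' i = value st i).

Definition step (st st' : state) : Prop :=
  quota_round st st' \/ elim_round st st' \/ final_round st st'.

Definition is_count (tr : nat -> state) (k : nat) : Prop :=
  tr 0%N = init_state /\
  (forall j, (j < k)%N -> step (tr j) (tr j.+1)) /\
  ~ (exists st', step (tr k) st').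

End STV.

(* Main.v *)
Require Import Defs.
From HB Require Import structures.
From mathcomp Require Import all_boot all_order all_algebra.
Import Order.TTheory GRing.Theory Num.Theory.
Local Open Scope ring_scope.
Set Implicit Arguments. Unset Strict Implicit.
Section L.
Variable T : eqType.

Lemma ohead_filter_drop (P : pred T) (s : seq T) n y :
  uniq s -> ohead [seq x <- drop n s | P x] = Some y ->
  [/\ y \in s, (n <= index y s)%N, P y &
     forall z, z \in s -> (n <= index z s)%N -> (index z s < index y s)%N -> ~~ P z].
Proof.
elim: s n => [|a s IH] n /=; first by case: n.
move=> /andP[aNs us].
case: n => [|n].
  rewrite drop0 /=.
  case Pa: (P a) => /=.
    case=> <-; rewrite eqxx inE eqxx; split=> // z _ _; by rewrite ltn0.
  move=> H.
  have := IH 0%N us; rewrite drop0 => /(_ H) [ys _ Py Hz].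
  have ya : (a == y) = false by apply/negbTE; apply/eqP => ay; rewrite ay Py in Pa.
  rewrite ya inE ys orbT; split=> // z.
  rewrite inE; case/orP=> [/eqP -> | zs]; first by rewrite Pa.
  case: (eqVneq a z) => [<-|az]; first by rewrite Pa.
  by move=> _; rewrite ?ltnS; apply: Hz.
move=> /= H; have [ys le Py Hz] := IH n us H.
have ya : (a == y) = false by apply/negbTE; apply/eqP => ay; rewrite ay ys in aNs.
rewrite ya inE ys orbT ltnS; split=> // z.
rewrite inE; case/orP=> [/eqP -> | zs]; first by rewrite /= ?eqxx.
case: (eqVneq a z) => [<-|az]; first by rewrite /= ?eqxx.
by rewrite /= ?(negbTE az) ?ya !ltnS; apply: Hz.
Qed.

Lemma ohead_filter_intro (P : pred T) (s : seq T) y :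
  y \in s -> P y -> (forall z, z \in s -> (index z s < index y s)%N -> ~~ P z) ->
  ohead [seq x <- s | P x] = Some y.
Proof.
elim: s => [|a s IH] //=.
rewrite inE; case: (eqVneq a y) => [-> _ -> //| ay] /= ys Py Hz.
have Pa : P a = false.
  by apply/negbTE; apply: Hz; rewrite ?inE ?eqxx //= eqxx.
rewrite Pa; apply: IH => // z zs lt.
case: (eqVneq a z) => [<-|az]; first by rewrite Pa.
by apply: Hz; rewrite ?inE ?zs ?orbT //= ?(negbTE az) ?(negbTE ay) ?ltnS.
Qed.

Lemma ohead_filter_elim (P : pred T) (s : seq T) y :
  uniq s -> ohead [seq x <- s | P x] = Some y ->
  [/\ y \in s, P y & forall z, z \in s -> (index z s < index y s)%N -> ~~ P z].
Proof.
move=> us H; have := ohead_filter_drop (n:=0) us; rewrite drop0 => /(_ _ _ H) [? ? ? Hz].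
by split=> // z zs; apply: Hz.
Qed.
End L.

Lemma index_eq_mem (T : eqType) (s : seq T) x z :
  x \in s -> z \in s -> index z s = index x s -> z = x.
Proof.
move=> xs zs e; have := nth_index x zs; rewrite e nth_index //.
Qed.

Section Main.
Variables (C : finType) (R : realFieldType) (bs : seq (seq C)) (S : nat)
  (W : {set C}) (b c : C) (tau : C -> R).
Hypothesis Hu : all uniq bs.
Local Notation n := (size bs).
Local Notation stt := (state R bs).

Lemma uniq_ballot (i : 'I_n) : uniq (ballot i).
Proof. by apply: (allP Hu); rewrite /ballot mem_nth. Qed.

Definition Inv (s : stt) : Prop :=
  [/\ (forall i x, pile s i = Some x ->
        [/\ x \in ballot i, is_eligible s x &
          forall y, y \in ballot i -> (index y (ballot i) < index x (ballot i))%N ->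
            ~~ is_eligible s y]),
      (forall i, 0 <= value s i <= 1),
      (forall i x, ohead (ballot i) = Some x -> is_eligible s x ->
         pile s i = Some x /\ value s i = 1) &
      (c \notin seated s -> forall i x f, pile s i = Some x -> ohead (ballot i) = Some f ->
         f \in W -> x != f ->
         exists w, [/\ w \in W, w \in ballot i,
                       (index w (ballot i) < index x (ballot i))%N & value s i <= tau w])].

Lemma Inv_init : Inv (init_state R bs).
Proof.
split => /=.
- move=> i x H.
  have hx: x \in ballot i /\ index x (ballot i) = 0%N.
    by case: (ballot i) H => //= a l [<-]; rewrite inE !eqxx.
  split; [by case: hx | by rewrite /is_eligible !inE | by move=> y _; case: hx => _ ->].
- by move=> ?; rewrite ler01 lexx.
- by move=> i x ->.
- move=> _ i x f /= H1 H2 _; rewrite H1 in H2; case: H2 => ->; by rewrite eqxx.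
Qed.

Lemma move_ok (s' : stt) beta x y :
  uniq beta -> next_eligible s' beta x = Some y -> x \in beta -> ~~ is_eligible s' x ->
  (forall z, z \in beta -> (index z beta < index x beta)%N -> ~~ is_eligible s' z) ->
  [/\ y \in beta, (index x beta < index y beta)%N, is_eligible s' y &
    forall z, z \in beta -> (index z beta < index y beta)%N -> ~~ is_eligible s' z].
Proof.
move=> ub H xb xN Hb.
have [yb le Py Hz] := ohead_filter_drop ub H.
split=> // z zb lt.
case: (ltngtP (index z beta) (index x beta)) => [l|g|e].
- exact: Hb.
- exact: Hz.
- by rewrite (index_eq_mem xb zb e).
Qed.

Lemma Inv_quota (s s' : stt) :
  quota_round S s s' -> Inv s ->
  (forall x, x \in seated s' -> x \in W :|: [set b; c]) ->
  b \notin seated s' ->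
  (forall w i, w \in W -> reaches_quota S s w -> pile s i = Some w -> value s' i <= tau w) ->
  Inv s'.
Proof.
move=> [Hrun [Hex [Hseat [Helim Hp]]]] [P1 P2 P3 P4] Hsw Hb Htau.
have elig' x : is_eligible s' x = is_eligible s x && ~~ reaches_quota S s x.
  rewrite /is_eligible Hseat Helim in_setU inE negb_or.
  by case: (x \in seated s); case: (x \in elim s); case: (reaches_quota S s x).
have nelig x : ~~ is_eligible s x -> ~~ is_eligible s' x.
  by rewrite elig'; case: (is_eligible s x).
split.
- move=> i y Hy; have := Hp i; case E: (pile s i) => [x|]; last first.
    by move=> [H _]; rewrite H in Hy.
  have [xb xe xbef] := P1 i x E.
  case Rx: (reaches_quota S s x); move=> H; [case: H => _ Hpile' | case: H => Hpile' _].
  + rewrite Hpile' in Hy.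
    have xN : ~~ is_eligible s' x by rewrite elig' Rx andbF.
    have [yb _ ye Hz] := move_ok (uniq_ballot i) Hy xb xN (fun z zb l => nelig _ (xbef z zb l)).
    by split.
  + rewrite Hpile' in Hy; case: Hy => <-; split=> //.
    * by rewrite elig' xe Rx.
    * by move=> z zb l; apply: nelig; apply: xbef.
- move=> i; have := Hp i; case E: (pile s i) => [x|].
    by case: (reaches_quota S s x) => [[H _]|[_ ->]].
  by move=> [_ ->].
- move=> i x Hh; rewrite elig' => /andP[xe nR].
  have [E V] := P3 i x Hh xe.
  have := Hp i; rewrite E (negbTE nR) => -[-> ->]; by [].
- move=> cN i y f Hy Hh fW yf.
  have cN0 : c \notin seated s by move: cN; rewrite Hseat in_setU negb_or => /andP[].
  have := Hp i; case E: (pile s i) => [x|]; last first.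
    by move=> [H _]; rewrite H in Hy.
  have [xb xe xbef] := P1 i x E.
  case Rx: (reaches_quota S s x); move=> H; [case: H => _ Hpile' | case: H => Hpile' Hv].
  + rewrite Hpile' in Hy.
    have xN : ~~ is_eligible s' x by rewrite elig' Rx andbF.
    have [yb lt ye Hz] := move_ok (uniq_ballot i) Hy xb xN (fun z zb l => nelig _ (xbef z zb l)).
    have xS : x \in seated s' by rewrite Hseat in_setU inE Rx orbT.
    have xW : x \in W.
      have := Hsw x xS; rewrite !inE; case/orP=> [//|/orP[/eqP xb'|/eqP xc]].
        by rewrite -xb' xS in Hb.
      by rewrite -xc xS in cN.
    exists x; split=> //; exact: Htau.
  + rewrite Hpile' in Hy; case: Hy => e; subst y.
    have [w [wW wb lt V]] := P4 cN0 i x f E Hh fW yf.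
    by exists w; rewrite Hv.
Qed.

Lemma Inv_elim (s s' : stt) :
  elim_round S s s' -> Inv s ->
  (forall w, w \in W -> w \notin elim s') -> Inv s'.
Proof.
move=> [Hrun [Hlt [e [He [Hmin [Hseat [Helim Hp]]]]]]] [P1 P2 P3 P4] HW.
have elig' x : is_eligible s' x = is_eligible s x && (x != e).
  rewrite /is_eligible Hseat Helim in_setU1.
  by case: (x \in seated s); case: (x \in elim s); case: (x == e).
have nelig x : ~~ is_eligible s x -> ~~ is_eligible s' x.
  by rewrite elig'; case: (is_eligible s x).
split.
- move=> i y Hy; have := Hp i; case: ifP => [/eqP E [Hpile' _] | NE [Hpile' _]].
  + have [xb xe xbef] := P1 i e E.
    rewrite Hpile' in Hy.
    have xN : ~~ is_eligible s' e by rewrite elig' eqxx andbF.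
    have [yb _ ye Hz] := move_ok (uniq_ballot i) Hy xb xN (fun z zb l => nelig _ (xbef z zb l)).
    by split.
  + rewrite Hpile' in Hy; have [xb xe xbef] := P1 i y Hy.
    split=> //.
    * rewrite elig' xe /=; apply/eqP => ye; by rewrite Hy ye eqxx in NE.
    * by move=> z zb l; apply: nelig; apply: xbef.
- by move=> i; have := Hp i; case: ifP => _ [_ ->].
- move=> i x Hh; rewrite elig' => /andP[xe nR].
  have [E V] := P3 i x Hh xe.
  have := Hp i; rewrite E.
  have -> : (Some x == Some e) = false by apply/negbTE; rewrite /eq_op /=; exact: nR.
  by move=> [-> ->].
- move=> cN i y f Hy Hh fW yf.
  have cN0 : c \notin seated s by rewrite -Hseat.
  have := Hp i; case: ifP => [/eqP E [Hpile' Hv] | NE [Hpile' Hv]].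
  + have [xb xe xbef] := P1 i e E.
    rewrite Hpile' in Hy.
    have xN : ~~ is_eligible s' e by rewrite elig' eqxx andbF.
    have [yb lt ye Hz] := move_ok (uniq_ballot i) Hy xb xN (fun z zb l => nelig _ (xbef z zb l)).
    have ef : e != f.
      apply/eqP => ef; have := HW f fW; by rewrite Helim -ef in_setU1 eqxx.
    have [w [wW wb lt' V]] := P4 cN0 i e f E Hh fW ef.
    by exists w; split=> //; [exact: ltn_trans lt' lt | rewrite Hv].
  + rewrite Hpile' in Hy.
    have [w [wW wb lt V]] := P4 cN0 i y f Hy Hh fW yf.
    by exists w; rewrite Hv.
Qed.


Lemma step_mono (s s' : stt) : step S s s' ->
  (seated s \subset seated s') /\ (elim s \subset elim s').
Proof.
case=> [[_ [_ [-> [-> _]]]] | [[_ [_ [e [_ [_ [-> [-> _]]]]]]] | [_ [_ [-> [-> _]]]]]].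
- by rewrite subsetUl subxx.
- by rewrite subxx; split=> //; apply/subsetP => x xe; rewrite in_setU1 xe orbT.
- by rewrite subsetUl subxx.
Qed.

Lemma step_disj (s s' : stt) : step S s s' ->
  (forall x, x \in seated s -> x \notin elim s) ->
  (forall x, x \in seated s' -> x \notin elim s').
Proof.
move=> st D x.
case: st => [[_ [_ [-> [-> _]]]] | [[_ [_ [e [He [_ [-> [-> _]]]]]]] | [_ [_ [-> [-> _]]]]]].
- rewrite in_setU inE => /orP[/D //|/andP[]]; by rewrite /is_eligible => /andP[].
- move=> xs; rewrite in_setU1 (negbTE (D x xs)) orbF; apply/eqP => xe.
  by move: He; rewrite /is_eligible -xe xs.
- rewrite in_setU inE => /orP[/D //|]; by rewrite /is_eligible => /andP[].
Qed.

Lemma u_ge0 G beta : (forall w, w \in W -> 0 <= tau w) ->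
  0 <= u_complex c b W tau G beta.
Proof.
move=> t0; rewrite /u_complex.
case: ifP => _ //; case: ifP => _ //; case: ifP => _ //.
case: (ohead beta) => [f|] //; case: ifP => fW //.
apply: (big_ind (fun x => 0 <= x)); first exact: t0.
  by move=> x y hx hy; rewrite le_max hx.
by move=> w wW; exact: t0.
Qed.

Lemma count_sumR (P : pred (seq C)) :
  (count P bs)%:R = \sum_(i < n) (P (ballot i))%:R :> R.
Proof.
have -> : (count P bs)%:R = \sum_(beta <- bs) (P beta)%:R :> R.
  elim: (bs) => [|a l IH]; first by rewrite big_nil.
  by rewrite big_cons /= natrD IH.
by rewrite (big_nth [::]) big_mkord.
Qed.

Lemma sum_in_ballots (F : seq C -> R) :
  \sum_(beta <- bs) F beta = \sum_(i < n) F (ballot i).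
Proof. by rewrite (big_nth [::]) big_mkord. Qed.

Lemma c_notin_G : ~ AG bs c c.
Proof.
rewrite /AG; apply/negP; rewrite -leqNgt; apply: sub_count => beta /=.
case: beta => //= a l /eqP [->]; by rewrite /first_in /= !inE eqxx.
Qed.

Lemma tally_ge (s : stt) g : Inv s -> is_eligible s g ->
  (L_basic bs g)%:R <= cand_tally s g.
Proof.
move=> [P1 P2 P3 P4] ge.
rewrite /L_basic count_sumR /cand_tally (bigID (fun i => pile s i == Some g)) /=.
rewrite [X in _ + X]big1 ?addr0; last first.
  move=> i /negbTE Np; case: eqP => // Hh; have [E _] := P3 i g Hh ge.
  by rewrite E eqxx in Np.
apply: ler_sum => i _; case: eqP => Hh.
  by have [_ ->] := P3 i g Hh ge.
by case/andP: (P2 i).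
Qed.

Lemma tally_le (s : stt) g : Inv s -> is_eligible s g -> is_eligible s c ->
  cand_tally s c <= (U_comp bs c g)%:R.
Proof.
move=> [P1 P2 P3 P4] ge ce.
rewrite /U_comp count_sumR /cand_tally.
rewrite [X in _ <= X](bigID (fun i => pile s i == Some c)) /=.
rewrite -[X in X <= _]addr0; apply: lerD; last by apply: sumr_ge0 => i _.
apply: ler_sum => i /eqP E.
have [cb _ cbef] := P1 i c E.
have -> : first_in [set c; g] (ballot i) = Some c.
  apply: ohead_filter_intro; first by [].
    by rewrite !inE eqxx.
  move=> z zb lt; rewrite !inE; apply/norP; split.
    by apply/eqP => zc; rewrite zc ltnn in lt.
  by apply/eqP => zg; have := cbef z zb lt; rewrite zg ge.
by rewrite eqxx; case/andP: (P2 i).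
Qed.

End Main.

Theorem lemma4 (C : finType) (R : realFieldType)
  (bs : seq (seq C)) (S : nat)
  (W : {set C}) (b c : C) (tau : C -> R) (G : {set C})
  (tr : nat -> @state C R bs) (k : nat) :
  all uniq bs ->
  is_count S tr k ->
  b != c -> b \notin W -> c \notin W ->
  (forall w, w \in W -> 0 <= tau w) ->
  (forall g, g \in G -> AG bs g c) ->
  (* only candidates in W, b, c can be seated *)
  (forall j x, (j <= k)%N -> x \in seated (tr j) -> x \in W :|: [set b; c]) ->
  (* all candidates in W are seated (by the end of the count) *)
  (forall w, w \in W -> w \in seated (tr k)) ->
  (* transfer values of ballots in w's pile when w is seated are at most tau w *)
  (forall j w i, (j < k)%N -> quota_round S (tr j) (tr j.+1) -> w \in W ->
     reaches_quota S (tr j) w -> pile (tr j) i = Some w ->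
     value (tr j.+1) i <= tau w) ->
  (* at every point of the count at which b is eligible *)
  forall j, (j <= k)%N -> is_eligible (tr j) b ->
    cand_tally (tr j) c <= U_complex bs c b W tau G.
Proof.
move=> Hu [H0 [Hsteps Hend]] bc bW cW t0 HG Hseated HWseat Htau j jk bj.
have mono t t' : (t <= t')%N -> (t' <= k)%N ->
    seated (tr t) \subset seated (tr t') /\ elim (tr t) \subset elim (tr t').
  elim: t' => [|t' IH] le Hk.
    by rewrite leqn0 in le; move/eqP: le => ->; rewrite !subxx.
  case: (leqP t t') => lt.
    have [s1 e1] := IH lt (ltnW Hk).
    have [s2 e2] := step_mono (Hsteps t' Hk).
    by split; [exact: subset_trans s1 s2 | exact: subset_trans e1 e2].
  have -> : t = t'.+1 by apply/eqP; rewrite eqn_leq le lt.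
  by rewrite !subxx.
have elig_anti t t' x : (t <= t')%N -> (t' <= k)%N ->
    is_eligible (tr t') x -> is_eligible (tr t) x.
  move=> le Hk; have [s1 e1] := mono t t' le Hk.
  rewrite /is_eligible => /andP[xs xe]; apply/andP; split.
    by apply: contra xs; apply: (subsetP s1).
  by apply: contra xe; apply: (subsetP e1).
have disj t : (t <= k)%N -> forall x, x \in seated (tr t) -> x \notin elim (tr t).
  elim: t => [|t IH] Hk x.
    by rewrite H0 /= inE.
  exact: (step_disj (Hsteps t Hk) (IH (ltnW Hk))).
have WnE t w : (t <= k)%N -> w \in W -> w \notin elim (tr t).
  move=> Hk wW; apply/negP => we.
  have [_ e1] := mono t k Hk (leqnn k).
  by have := disj k (leqnn k) w (HWseat w wW); rewrite (subsetP e1 _ we).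
have bt t : (t <= j)%N -> is_eligible (tr t) b.
  by move=> le; exact: (elig_anti t j b le jk bj).
have nf t : (t < j)%N -> quota_round S (tr t) (tr t.+1) \/ elim_round S (tr t) (tr t.+1).
  move=> lt; case: (Hsteps t (leq_trans lt jk)) => [q|[e|f]]; [by left | by right |].
  exfalso; case: f => [_ [_ [Hs _]]].
  have bs1 : b \in seated (tr t.+1).
    by rewrite Hs in_setU inE (bt t (ltnW lt)) orbT.
  have [s1 _] := mono t.+1 j lt jk.
  by move: bj; rewrite /is_eligible (subsetP s1 _ bs1).
have Inv_t t : (t <= j)%N -> Inv W c tau (tr t).
  elim: t => [|t IH] le.
    by rewrite H0; exact: Inv_init.
  have lt : (t < j)%N by [].
  case: (nf t lt) => [q|e].
    apply: (Inv_quota Hu q (IH (ltnW lt))).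
    - by move=> x xs; exact: (Hseated t.+1 x (leq_trans lt jk) xs).
    - by case/andP: (bt t.+1 lt).
    - by move=> w i wW rq E; exact: (Htau t w i (leq_trans lt jk) q wW rq E).
  apply: (Inv_elim Hu e (IH (ltnW lt))).
  by move=> w wW; exact: (WnE t.+1 w (leq_trans lt jk) wW).
have [P1 P2 P3 P4] := Inv_t j (leqnn j).
rewrite /U_complex sum_in_ballots /cand_tally.
rewrite [X in _ <= X](bigID (fun i => pile (tr j) i == Some c)) /=.
rewrite -[X in X <= _]addr0; apply: lerD; last first.
  by apply: sumr_ge0 => i _; apply: u_ge0.
apply: ler_sum => i /eqP E.
have [cb ce cbef] := P1 i c E.
rewrite /u_complex.
case: ifP => [/existsP [g /andP [gGW /eqP Hfg]] | _].
  exfalso; move: gGW; rewrite in_setD => /andP [gNW gG].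
  have gc : g != c.
    by apply/eqP => gc; apply: (@c_notin_G C bs c); rewrite -{1}gc; exact: HG g gG.
  have [gb _ gbef] := ohead_filter_elim (uniq_ballot Hu i) Hfg.
  have lt : (index g (ballot i) < index c (ballot i))%N.
    case: ltngtP => // [l|e].
      by have := gbef c cb l; rewrite !inE eqxx orbT.
    by move: gc; rewrite (index_eq_mem cb gb e) eqxx.
  have gN := cbef g gb lt.
  have gE : g \in elim (tr j).
    move: (gN); rewrite /is_eligible negb_and !negbK => /orP [gs|//].
    have := Hseated j g jk gs; rewrite !inE (negbTE gNW) (negbTE gc) orbF /=.
    by move=> /eqP gbb; move: gN bj; rewrite gbb => /negbTE ->.
  have ex : exists t, g \in elim (tr t) by exists j.
  case: (ex_minnP ex) => t1 gt1 tmin.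
  have le := tmin j gE.
  case: t1 gt1 tmin le => [|t] gt1 tmin le.
    by rewrite H0 inE in gt1.
  case: (nf t le) => [[_ [_ [_ [He _]]]] | [_ [_ [e [ee [emin [_ [He _]]]]]]]].
    by rewrite He in gt1; have := tmin t gt1; rewrite ltnn.
  rewrite He in_setU1 in gt1; case/orP: gt1 => [/eqP ge | gt]; last first.
    by have := tmin t gt; rewrite ltnn.
  subst e.
  have ct : is_eligible (tr t) c := elig_anti t j c (ltnW le) jk ce.
  have It := Inv_t t (ltnW le).
  have l0 := emin c ct.
  have l1 := tally_ge It ee.
  have l2 := tally_le It ee ct.
  have l3 : (U_comp bs c g)%:R < (L_basic bs g)%:R :> R by rewrite ltr_nat; exact: HG g gG.
  have := le_lt_trans (le_trans l1 (le_trans l0 l2)) l3.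
  by rewrite ltxx.
case: ifP => [cNb | _]; first by rewrite cb in cNb.
case: ifP => [/eqP Hfb | _].
  have [bb _ bbef] := ohead_filter_elim (uniq_ballot Hu i) Hfb.
  have lt : (index b (ballot i) < index c (ballot i))%N.
    case: ltngtP => // [l|e].
      by have := bbef c cb l; rewrite !inE eqxx orbT.
    by move: bc; rewrite (index_eq_mem cb bb e) eqxx.
  by have := cbef b bb lt; rewrite bj.
case Hh: (ohead (ballot i)) => [f|]; last by case/andP: (P2 i).
case: ifP => fW; last by case/andP: (P2 i).
have cf : c != f by apply/eqP => cf; rewrite cf fW in cW.
have cS : c \notin seated (tr j) by case/andP: ce.
have [w [wW wb lt V]] := P4 cS i c f E Hh fW cf.
apply: (le_trans V); apply: le_bigmax_seq => //.
by rewrite in_take.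
Qed.
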